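(* Let $H$ be a finite connected graph (loops allowed) with at least two nodes, such that there is no pair of distinct nodes $i\neq j$ with $N(i)\subseteq N(j)$. Let $G=H\times H$ be its weak square. Then the projection $\pi_1:G\to H$, $\pi_1(i_1,i_2)=i_1$, is an isolated vertex of the graph $\hom(G,H)$; in particular $\hom(G,H)$ is disconnected.
   Context: $N(i)$ denotes the set of nodes adjacent to $i$ in $H$ (containing $i$ iff $i$ is looped). The weak square $H\times H$ has node set all ordered pairs $(i_1,i_2)$ of nodes of $H$, with $(i_1,i_2)\sim(j_1,j_2)$ iff $i_1\sim j_1$ and $i_2\sim j_2$ in $H$ (so it may have loops). $\hom(G,H)$ is the set of graph homomorphisms $G\to H$, made into a graph by declaring two homomorphisms adjacent iff they differ at exactly one node of $G$. *)

(* Defs.v *)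
From mathcomp Require Import all_boot.
Set Implicit Arguments. Unset Strict Implicit. Unset Printing Implicit Defensive.

(* A (finite, loops allowed) graph is a symmetric relation e on a finType T. *)

Definition nbhd (T : finType) (e : rel T) (i : T) : {set T} := [set j | e i j].

Definition connected_graph (T : finType) (e : rel T) : Prop :=
  forall x y : T, connect e x y.

Definition weak_sq (T : finType) (e : rel T) : rel (T * T)%type :=
  fun u v => e u.1 v.1 && e u.2 v.2.

Definition is_hom (S T : finType) (eS : rel S) (eT : rel T) (f : {ffun S -> T}) : bool :=
  [forall x, forall y, eS x y ==> eT (f x) (f y)].

(* Two maps are adjacent in hom(G,H) iff they differ at exactly one node of G. *)
Definition differ_at_one (S T : finType) (f g : {ffun S -> T}) : bool :=
  #|[set x | f x != g x]| == 1.

Definition hom_rel (S T : finType) (eS : rel S) (eT : rel T) : rel {ffun S -> T} :=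
  fun f g => [&& is_hom eS eT f, is_hom eS eT g & differ_at_one f g].

Definition proj1_ffun (T : finType) : {ffun (T * T)%type -> T} := [ffun u => u.1].

(* Main.v *)
Require Import Defs.
From mathcomp Require Import all_boot.

Lemma has_other_nb (T : finType) (e : rel T) :
  symmetric e -> connected_graph e -> 1 < #|T| ->
  forall b : T, exists y, (y != b) && e b y.
Proof.
move=> sym con cT b.
have [z zb] : exists z, z != b.
  apply/existsP; apply: contraLR cT; rewrite negb_exists => /forallP H.
  rewrite -leqNgt; apply: (@leq_trans #|pred1 b|); last by rewrite card1.
  apply: subset_leq_card; apply/subsetP => x _; have := H x; rewrite negbK.
  by rewrite inE.
apply/existsP; apply: contraLR zb; rewrite negb_exists => /forallP H.
have cl : closed e (pred1 b).
  move=> x y exy; rewrite -!topredE /=.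
  case: (eqVneq x b) => [xb|xb].
    subst x; have := H y; rewrite exy andbT negbK => /eqP ->; by rewrite eqxx.
  case: (eqVneq y b) => [yb|//]; subst y.
  by have := H x; rewrite xb /= sym exy.
by have := closed_connect cl (con b z); rewrite !inE eqxx => <-.
Qed.

Theorem mainTheorem9 (T : finType) (e : rel T) :
  symmetric e ->
  connected_graph e ->
  1 < #|T| ->
  (forall i j : T, i != j -> ~~ (nbhd e i \subset nbhd e j)) ->
  [/\ is_hom (weak_sq e) e (proj1_ffun T),
      (forall g : {ffun (T * T)%type -> T},
          is_hom (weak_sq e) e g -> ~~ differ_at_one (proj1_ffun T) g)
    & exists f g : {ffun (T * T)%type -> T},
        [/\ is_hom (weak_sq e) e f, is_hom (weak_sq e) e g
          & ~~ connect (hom_rel (weak_sq e) e) f g]].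
Proof.
move=> sym con cT nsub.
have h1 : is_hom (weak_sq e) e (proj1_ffun T).
  by apply/forallP => x; apply/forallP => y; apply/implyP; rewrite !ffunE => /andP[].
have iso : forall g : {ffun (T * T)%type -> T},
    is_hom (weak_sq e) e g -> ~~ differ_at_one (proj1_ffun T) g.
  move=> g hg; apply/negP => /cards1P [[a b] Hs].
  have ab : (proj1_ffun T (a, b) != g (a, b)).
    have : (a, b) \in [set (a, b)] by rewrite inE.
    by rewrite -Hs inE.
  have other : forall u, u != (a, b) -> g u = u.1.
    move=> u ub; apply/eqP; rewrite eq_sym -(ffunE (fun u : T * T => u.1)).
    apply/negPn/negP => H.
    have : u \in [set x | proj1_ffun T x != g x] by rewrite inE.
    by rewrite Hs inE (negbTE ub).
  rewrite ffunE /= in ab.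
  apply: (negP (nsub _ _ ab)); apply/subsetP => x; rewrite !inE => eax.
  have [y /andP[yb eby]] := @has_other_nb _ _ sym con cT b.
  have := (forallP (forallP hg (a, b)) (x, y)).
  rewrite /weak_sq /= eax eby /= (other (x, y)) //.
  by apply: contra yb; rewrite xpair_eqE => /andP[_].
split => //.
pose p2 : {ffun (T * T)%type -> T} := [ffun u => u.2].
exists (proj1_ffun T), p2; split => //.
  by apply/forallP => x; apply/forallP => y; apply/implyP; rewrite !ffunE => /andP[].
apply/negP => /connectP [[|y p] /= pth eq].
  have [i [j [_ _ ij]]] := card_gt1P cT.
  move/ffunP: eq => /(_ (i, j)); rewrite !ffunE /= => ji.
  by rewrite ji eqxx in ij.
move: pth => /andP[/and3P[_ hy dy] _].
by have := iso y hy; rewrite dy.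
Qed.
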